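(* Let $T_0$ be an unrooted binary phylogenetic tree on $n$ leaves. There is an NNI-walk of length $O(n^2)$ that visits every tree of the SPR neighborhood $N_{SPR}(T_0)$. *)

(* Defs.v *)
From mathcomp Require Import all_boot all_fingroup.
Set Implicit Arguments. Unset Strict Implicit. Unset Printing Implicit Defensive.

(* Vertex set of an unrooted binary phylogenetic tree on n leaves:
   n leaves + (n-2) internal vertices.  Vertex i with i < n is the leaf
   labelled i; vertices n .. 2n-3 are the (unlabelled) internal vertices. *)
Definition V (n : nat) : nat := n + (n - 2).
Definition vtx (n : nat) := 'I_(V n).

Definition deg (n : nat) (e : rel (vtx n)) (v : vtx n) : nat :=
  #|[pred w | e v w]|.

(* A (concrete) unrooted binary phylogenetic tree on leaf set {0..n-1}:
   a simple connected graph in which leaves have degree 1 and internal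
   vertices degree 3 (connected with #V-1 edges, hence a tree). *)
Definition phylo_tree (n : nat) (e : rel (vtx n)) : Prop :=
  [/\ symmetric e, irreflexive e,
      (forall v : vtx n, deg e v = if v < n then 1 else 3)
    & (forall u v : vtx n, connect e u v)].

(* Equality of phylogenetic trees: isomorphism fixing every leaf label. *)
Definition tree_iso (n : nat) (e e' : rel (vtx n)) : Prop :=
  exists f : {perm vtx n},
    (forall v : vtx n, v < n -> f v = v) /\
    (forall u v : vtx n, e' (f u) (f v) = e u v).

Definition del_edge (T : eqType) (x y : T) (e : rel T) : rel T :=
  fun p q => e p q && ~~ (((p == x) && (q == y)) || ((p == y) && (q == x))).
Definition add_edge (T : eqType) (x y : T) (e : rel T) : rel T :=
  fun p q => [|| e p q, (p == x) && (q == y) | (p == y) && (q == x)].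

(* NNI move across the internal edge {u,v}: swap a subtree b hanging at u
   (b <> v) with a subtree c hanging at v (c <> u). *)
Definition nni (n : nat) (e e' : rel (vtx n)) : Prop :=
  exists u v b c : vtx n,
    [/\ n <= u, n <= v, e u v,
        [/\ e u b, b != v, e v c & c != u] &
        tree_iso (add_edge u c (add_edge v b (del_edge u b (del_edge v c e)))) e'].

(* SPR move: the subtree containing p, attached at the internal vertex u
   (whose other neighbours are x and y), is pruned; u is suppressed
   (edge {x,y} created); then the pruned subtree is regrafted, via u,
   onto an edge {a,b} of the remaining component. *)
Definition spr (n : nat) (e e' : rel (vtx n)) : Prop :=
  exists u p x y a b : vtx n,
    let e1 := add_edge x y (del_edge u x (del_edge u y e)) in
    [/\ n <= u, [/\ e u p, e u x & e u y], [/\ p != x, p != y & x != y],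
        [/\ e1 a b & connect (del_edge u p e1) x a] &
        tree_iso (add_edge u a (add_edge u b (del_edge a b e1))) e'].

Definition in_spr_nbhd (n : nat) (T0 T : rel (vtx n)) : Prop := spr T0 T.

(* An NNI-walk: a nonempty sequence of trees, consecutive ones related by
   an NNI move.  Its length is the number of moves, (size w).-1. *)
Definition nni_walk (n : nat) (w : seq (rel (vtx n))) : Prop :=
  (0 < size w)%N /\
  (forall i, (i < size w)%N -> phylo_tree (nth (fun _ _ => false) w i)) /\
  (forall i, (i.+1 < size w)%N ->
     nni (nth (fun _ _ => false) w i) (nth (fun _ _ => false) w i.+1)).

Definition visits (n : nat) (w : seq (rel (vtx n))) (T : rel (vtx n)) : Prop :=
  exists2 i, (i < size w)%N & tree_iso (nth (fun _ _ => false) w i) T.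

(* Main.v *)
Require Import Defs.
From mathcomp Require Import all_boot all_fingroup zify.
From Stdlib Require Import FunctionalExtensionality.
Set Implicit Arguments. Unset Strict Implicit. Unset Printing Implicit Defensive.


Lemma rel_ext (T:Type) (r s : rel T) : (forall p q, r p q = s p q) -> r = s.
Proof.
move=> H; apply: functional_extensionality => p; apply: functional_extensionality => q; exact: H.
Qed.

Lemma tree_iso_refl n (e : rel (vtx n)) : tree_iso e e.
Proof. exists 1%g; split => *; by rewrite !perm1. Qed.

Lemma conn_closed (T:finType) (e:rel T) (D : pred T) :
  (forall v z, D v -> e v z -> D z) -> forall s t, D s -> connect e s t -> D t.
Proof.
move=> HD s t Ds /connectP [p Hp ->]; elim: p s Ds Hp => [|z p IH] s Ds //= /andP [esz Hp].
exact: IH (HD _ _ Ds esz) Hp.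
Qed.

Lemma del_conn (T:finType) (e:rel T) x y s w : connect e s w ->
  [\/ connect (del_edge x y e) s w, connect (del_edge x y e) x w
    | connect (del_edge x y e) y w].
Proof.
set d := del_edge x y e.
pose D := [pred z | [|| connect d s z, connect d x z | connect d y z]].
move=> H.
have : D w.
  apply: (conn_closed (e:=e) _ _ H); last by rewrite /D /= connect0.
  move=> v z; rewrite /D /= => Dv evz.
  case Hp: (((v == x) && (z == y)) || ((v == y) && (z == x))).
    case/orP: Hp => /andP [_ /eqP ->]; by rewrite connect0 ?orbT.
  have dvz : d v z by rewrite /d /del_edge evz Hp.
  case/or3P: Dv => C; apply/or3P;
   [apply: Or31 | apply: Or32 | apply: Or33];
   apply: connect_trans C (connect1 dvz).
rewrite /D /=; case/or3P => C; [exact: Or31 | exact: Or32 | exact: Or33].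
Qed.

Lemma del_sym (T:eqType) (e:rel T) x y : symmetric e -> symmetric (del_edge x y e).
Proof.
move=> Hs p q; rewrite /del_edge Hs; congr (_ && ~~ _).
by case: (p == x) (q == y) (p == y) (q == x) => [] [] [] [].
Qed.

Lemma add_sym (T:eqType) (e:rel T) x y : symmetric e -> symmetric (add_edge x y e).
Proof.
move=> Hs p q; rewrite /add_edge Hs; congr (_ || _).
by case: (p == x) (q == y) (p == y) (q == x) => [] [] [] [].
Qed.

Lemma del_irr (T:eqType) (e:rel T) x y : irreflexive e -> irreflexive (del_edge x y e).
Proof. by move=> Hi p; rewrite /del_edge Hi. Qed.

Lemma add_irr (T:eqType) (e:rel T) x y : x != y -> irreflexive e -> irreflexive (add_edge x y e).
Proof.
move=> xy Hi p; rewrite /add_edge Hi /=.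
apply/negP => /orP [] /andP [/eqP -> /eqP E]; move: xy; by rewrite E eqxx.
Qed.

Lemma deg_del n (e : rel (vtx n)) x y w : symmetric e -> e x y -> x != y ->
  deg (del_edge x y e) w + (w == x) + (w == y) = deg e w.
Proof.
move=> Hs exy xy; rewrite /deg.
case: (eqVneq w x) => [->|wx].
  rewrite (cardD1 y [pred z | e x z]) inE exy (negbTE xy) addn0 addn1 add1n.
  apply: congr1.
  apply: eq_card => z; rewrite !inE /del_edge eqxx (negbTE xy) /= andbC.
  by rewrite orbF.
case: (eqVneq w y) => [->|wy].
  rewrite (cardD1 x [pred z | e y z]) inE Hs exy addn0 addn1; apply: congr1.
  apply: eq_card => z; rewrite !inE /del_edge eqxx eq_sym (negbTE xy) /= andbC.
  by [].
rewrite !addn0; apply: eq_card => z; rewrite !inE /del_edge (negbTE wx) (negbTE wy) /=.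
by rewrite andbT.
Qed.

Lemma deg_add n (e : rel (vtx n)) x y w : symmetric e -> ~~ e x y -> x != y ->
  deg (add_edge x y e) w = deg e w + (w == x) + (w == y).
Proof.
move=> Hs exy xy; rewrite /deg.
case: (eqVneq w x) => [->|wx].
  rewrite (negbTE xy) addn0 addn1.
  rewrite -(@eq_card _ [predU1 y & [pred z | e x z]]).
    by rewrite cardU1 inE exy.
  move=> z; rewrite !inE /add_edge eqxx (negbTE xy) /= orbF orbC.
  by [].
case: (eqVneq w y) => [->|wy].
  rewrite addn0 addn1.
  rewrite -(@eq_card _ [predU1 x & [pred z | e y z]]).
    by rewrite cardU1 inE Hs exy.
  move=> z; rewrite !inE /add_edge eqxx [y == x]eq_sym (negbTE xy) /= orbC.
  by [].
rewrite !addn0; apply: eq_card => z; rewrite !inE /add_edge (negbTE wx) (negbTE wy) /=.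
by rewrite orbF.
Qed.

Ltac brute := repeat (case: eqP => [?|?]; subst => //=).

Definition Ecnt (T : finType) (e : rel T) := #|[set q : T * T | e q.1 q.2]|.

Lemma Ecnt_sum (T : finType) (e : rel T) : Ecnt e = \sum_v #|[pred w | e v w]|.
Proof.
rewrite /Ecnt -sum1_card.
rewrite (eq_bigr (fun v => \sum_(w | e v w) 1)); last first.
  by move=> v _; rewrite -sum1_card.
rewrite pair_big_dep /=; apply: eq_bigl => q; by rewrite inE.
Qed.

Lemma Ecnt_del (T : finType) (e : rel T) x y : e x y -> e y x -> x != y ->
  Ecnt e = (Ecnt (del_edge x y e)).+2.
Proof.
move=> exy eyx xy; rewrite /Ecnt.
have -> : [set q : T * T | e q.1 q.2] =
   [set (x, y); (y, x)] :|: [set q : T * T | del_edge x y e q.1 q.2].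
  apply/setP => [[p q]]; rewrite !inE /del_edge /= !xpair_eqE.
  by brute; rewrite ?exy ?eyx ?andbT ?orbT ?orbF ?andbF.
rewrite cardsU cards2 xpair_eqE (negbTE xy) /=.
have -> : [set (x, y); (y, x)] :&: [set q : T * T | del_edge x y e q.1 q.2] = set0.
  apply/setP => [[p q]]; rewrite !inE /del_edge /= !xpair_eqE.
  by brute; rewrite ?andbF.
by rewrite cards0 subn0.
Qed.

Lemma Ecnt_lb (T : finType) (e : rel T) s : symmetric e ->
  (forall w, connect e s w) -> 2 * (#|T| - 1) <= Ecnt e.
Proof.
move=> Hs Hc.
pose EB (B : {set T}) := [set q : T * T | [&& q.1 \in B, q.2 \in B & e q.1 q.2]].
suff: forall k (B : {set T}), #|~: B| <= k -> s \in B -> 2 * (#|B| - 1) <= #|EB B| ->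
   2 * (#|T| - 1) <= Ecnt e.
  move=> H; apply: (H #|T| [set s]); rewrite ?max_card ?set11 // cards1 subnn.
  by [].
have fin : forall B : {set T}, B = setT -> 2 * (#|B| - 1) <= #|EB B| -> 2 * (#|T| - 1) <= Ecnt e.
  move=> B -> HB; rewrite cardsT in HB; apply: (leq_trans HB); rewrite /Ecnt.
  by apply: subset_leq_card; apply/subsetP => q; rewrite !inE => /and3P [].
elim=> [|k IH] B Hk sB HB.
  apply: (fin B) => //; apply/setP => z; rewrite inE; apply/negPn/negP => zB.
  have : 0 < #|~: B| by apply/card_gt0P; exists z; rewrite inE.
  by rewrite lt0n -leqn0 Hk.
have [BT|/negP BT] := eqVneq B setT; first exact: (fin B).
have [[b t] /= /andP [/andP [bB tB] ebt] | noedge] :=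
  pickP [pred q : T * T | (q.1 \in B) && (q.2 \notin B) && e q.1 q.2].
  have tb : t != b by apply: contraNneq tB => ->.
  apply: (IH (t |: B)).
  - have tC : t \in ~: B by rewrite inE.
    move: Hk; rewrite (cardsD1 t (~: B)) tC add1n ltnS; apply: leq_trans.
    by apply: subset_leq_card; apply/subsetP => z; rewrite !inE negb_or => /andP [-> ->].
  - by rewrite inE sB orbT.
  - rewrite cardsU1 tB add1n subSS.
    have B0 : 0 < #|B| by apply/card_gt0P; exists s.
    have -> : #|B| = (#|B| - 1).+1 by rewrite subn1 prednK.
    rewrite subn0 mulnS; apply: (leq_trans (leq_add (leqnn 2) HB)).
    have <- : #|(b, t) |: ((t, b) |: EB B)| = 2 + #|EB B|.
      by rewrite cardsU1 cardsU1 !inE !xpair_eqE (negbTE tb) /= (negbTE tB) !andbF.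
    apply: subset_leq_card; apply/subsetP => -[p q]; rewrite !inE !xpair_eqE /=.
    case/or3P => [/andP [/eqP -> /eqP ->] | /andP [/eqP -> /eqP ->] | /and3P [-> -> ->]].
    + by rewrite eqxx bB ebt orbT.
    + by rewrite eqxx bB Hs ebt !orbT.
    + by rewrite !orbT.
exfalso; apply: BT; apply/eqP/setP => z; rewrite inE.
apply: (conn_closed (D := mem B) _ sB (Hc z)) => v w vB evw.
apply/negPn/negP => wB; have vB1 : v \in B by exact: vB. have wB1 : w \notin B by exact: wB.
move: (noedge (v, w)); by rewrite /= vB1 evw wB1.
Qed.

Lemma Ecnt_phylo n (e : rel (vtx n)) : 2 <= n -> phylo_tree e -> Ecnt e = n + 3 * (n - 2).
Proof.
move=> n2 [Hs Hi Hd Hc]; rewrite Ecnt_sum.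
rewrite (eq_bigr (fun v : vtx n => if v < n then 1 else 3)); last by move=> v _; exact: Hd.
rewrite -(big_mkord xpredT (fun i => if i < n then 1 else 3)).
rewrite /V (@big_cat_nat _ _ _ n 0 (n + (n - 2)) _ _ (leq0n n) (leq_addr _ _)) /=.
rewrite (@eq_big_nat _ _ _ 0 n _ (fun _ => 1)); last by move=> i /andP [_ ->].
rewrite (@eq_big_nat _ _ _ n (n + (n-2)) (fun i => if i < n then 1 else 3) (fun _ => 3)); last first.
  by move=> i /andP [H _]; rewrite ltnNge H.
by rewrite !sum_nat_const_nat subn0 addKn muln1 mulnC.
Qed.

Lemma bridge n (e : rel (vtx n)) s t : 2 <= n -> phylo_tree e -> e s t ->
  ~~ connect (del_edge s t e) s t.
Proof.
move=> n2 Hp est; have [Hs Hi Hd Hc] := Hp; apply/negP => C.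
set d := del_edge s t e.
have Hcd : forall w, connect d s w.
  move=> w; case: (del_conn s t (Hc s w)) => // Ct; exact: connect_trans C Ct.
have st : s != t by apply: contraTneq est => ->; rewrite Hi.
have := Ecnt_lb (del_sym s t Hs) Hcd.
have ets : e t s by rewrite Hs.
have := Ecnt_phylo n2 Hp; rewrite (Ecnt_del est ets st) card_ord /V.
move=> H1 H2; move: H1 H2 n2; rewrite -(_ : Ecnt (del_edge s t e) = Ecnt d) //; move: (Ecnt d) => E. lia.
Qed.

Lemma no_tri n (e : rel (vtx n)) u v w : 2 <= n -> phylo_tree e -> e u v -> e u w -> e w v ->
  False.
Proof.
move=> n2 Hp euv euw ewv; have [Hs Hi _ _] := Hp.
have uw : u != w by apply: contraTneq euw => ->; rewrite Hi.
have wv : w != v by apply: contraTneq ewv => ->; rewrite Hi.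
have uv : u != v by apply: contraTneq euv => ->; rewrite Hi.
move/negP: (bridge n2 Hp euv); apply.
apply: (connect_trans (y:=w)); apply: connect1; rewrite /del_edge ?euw ?ewv /=.
  by rewrite eqxx (negbTE uv) (negbTE wv).
by rewrite eqxx [w == u]eq_sym (negbTE uw) [w == v](negbTE wv).
Qed.

Lemma nni_phylo n (e : rel (vtx n)) u v b c : 2 <= n -> phylo_tree e -> e u v -> e u b ->
  b != v -> e v c -> c != u ->
  phylo_tree (add_edge u c (add_edge v b (del_edge u b (del_edge v c e)))).
Proof.
move=> n2 Hp euv eub bv evc cu; have [Hs Hi Hd Hc] := Hp.
have ub : u != b by apply: contraTneq eub => ->; rewrite Hi.
have uv : u != v by apply: contraTneq euv => ->; rewrite Hi.
have vc : v != c by apply: contraTneq evc => ->; rewrite Hi.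
have nuc : ~~ e u c by apply/negP => euc; apply: (no_tri n2 Hp euv euc); rewrite Hs.
have nvb : ~~ e v b by apply/negP => evb; apply: (no_tri n2 Hp euv eub); rewrite Hs.
have bc : b != c by apply: contraNneq nuc => <-.
set e1 := del_edge v c e; set e2 := del_edge u b e1; set e3 := add_edge v b e2.
have s1 : symmetric e1 := del_sym v c Hs.
have s2 : symmetric e2 := del_sym u b s1.
have s3 : symmetric e3 := add_sym v b s2.
have vb : v != b by rewrite eq_sym.
have uc : u != c by rewrite eq_sym.
have i3 : irreflexive e3 := add_irr vb (del_irr u b (del_irr v c Hi)).
have e1ub : e1 u b by rewrite /e1 /del_edge eub (negbTE uv) [u == c](negbTE uc).
have ne2vb : ~~ e2 v b by rewrite /e2 /e1 /del_edge (negbTE nvb).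
have ne3uc : ~~ e3 u c.
  rewrite /e3 /e2 /e1 /add_edge /del_edge (negbTE nuc) /= (negbTE uv) (negbTE ub) /=.
  by [].
split.
- exact: add_sym.
- exact: add_irr uc i3.
- move=> w; rewrite -Hd.
  have D1 := deg_del w Hs evc vc.
  have D2 := deg_del w s1 e1ub ub.
  have D3 := deg_add w s2 ne2vb vb.
  have D4 := deg_add w s3 ne3uc uc.
  rewrite D4 D3 -D1 -D2 -/e2; move: (deg e2 w) => d.
  by case: (w == v); case: (w == b); case: (w == u); case: (w == c); rewrite /= ?addn0 ?addn1 ?addnS ?addSn.
- have sg : symmetric (add_edge u c e3) := add_sym u c s3.
  have sub : forall p q, connect e2 p q -> connect (add_edge u c e3) p q.
    apply: connect_sub => p q h; apply: connect1; by rewrite /add_edge /e3 /add_edge h.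
  have guv : add_edge u c e3 u v.
    have e2uv : e2 u v.
      by rewrite /e2 /e1 /del_edge euv !eqxx (negbTE uv) [u == c](negbTE uc) [v == b](negbTE vb) [v == u]eq_sym (negbTE uv) !andbF.
    by rewrite /add_edge /e3 /add_edge e2uv.
  have Cu : forall z, z \in [:: u; v; b; c] -> connect (add_edge u c e3) u z.
    move=> z; rewrite !inE => /or4P [] /eqP ->.
    + exact: connect0.
    + exact: connect1.
    + apply: (connect_trans (y := v)); first exact: connect1.
      by apply: connect1; rewrite /add_edge /e3 /add_edge !eqxx orbT.
    + by apply: connect1; rewrite /add_edge !eqxx !orbT.
  have hub : forall w, connect (add_edge u c e3) u w.
    move=> w; case: (del_conn v c (Hc u w)) => H1.
    + case: (del_conn u b H1) => H2; apply: connect_trans (Cu _ _) (sub _ _ H2);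
        by rewrite !inE eqxx ?orbT.
    + case: (del_conn u b H1) => H2; apply: connect_trans (Cu _ _) (sub _ _ H2);
        by rewrite !inE eqxx ?orbT.
    + case: (del_conn u b H1) => H2; apply: connect_trans (Cu _ _) (sub _ _ H2);
        by rewrite !inE eqxx ?orbT.
  move=> p q; apply: (connect_trans (y := u)); last exact: hub.
  by rewrite (sym_connect_sym sg); exact: hub.
Qed.

Lemma cover_walk (T : finType) (r : rel T) (A : {set T}) s :
  symmetric r -> s \in A -> (forall p q, r p q -> q \in A) ->
  (forall t, t \in A -> connect r s t) ->
  exists l, [/\ path r s l, last s l = s, size l <= 2 * (#|A| - 1)
                & forall t, t \in A -> t \in s :: l].
Proof.
move=> Hs sA rA Hc.
pose Inv (B : {set T}) := exists l, [/\ path r s l, last s l = s,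
   size l <= 2 * (#|B| - 1) & forall t, t \in B -> t \in s :: l].
suff: forall k (B : {set T}), #|A :\: B| <= k -> B \subset A -> s \in B -> Inv B ->
   exists l, [/\ path r s l, last s l = s, size l <= 2 * (#|A| - 1)
                & forall t, t \in A -> t \in s :: l].
  move=> H; apply: (H #|A| [set s]); rewrite ?subset_leq_card ?subsetDl ?sub1set ?set11 //.
  by exists [::]; split => // t; rewrite !inE => ->.
have fin : forall B : {set T}, B \subset A -> A \subset B -> Inv B ->
   exists l, [/\ path r s l, last s l = s, size l <= 2 * (#|A| - 1)
                & forall t, t \in A -> t \in s :: l].
  move=> B BA AB [l [Hp Hl Hsz Hcov]].
  exists l; split => //.
    apply: (leq_trans Hsz); rewrite leq_mul2l; apply/orP; right.
    by apply: leq_sub2r; apply: subset_leq_card.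
  by move=> t tA; apply: Hcov; apply: (subsetP AB).
elim=> [|k IH] B Hk BA sB HI.
  apply: (fin B BA _ HI); apply/subsetP => t tA; apply/negPn/negP => tB.
  have : 0 < #|A :\: B| by apply/card_gt0P; exists t; rewrite inE tB.
  by rewrite lt0n -leqn0 Hk.
have [l [Hp Hl Hsz Hcov]] := HI.
have [[b t] /= /andP [/andP [bB tB] rbt] | noedge] :=
  pickP [pred q : T * T | (q.1 \in B) && (q.2 \notin B) && r q.1 q.2].
  have tA : t \in A := rA _ _ rbt.
  have tb : t != b by apply: contraNneq tB => ->.
  apply: (IH (t |: B)).
  - have tC : t \in A :\: B by rewrite inE tB tA.
    move: Hk; rewrite (cardsD1 t (A :\: B)) tC add1n ltnS; apply: leq_trans.
    apply: subset_leq_card; apply/subsetP => z; rewrite !inE negb_or.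
    by case/andP => /andP [-> ->] ->.
  - by rewrite subUset sub1set tA BA.
  - by rewrite inE sB orbT.
  have B0 : 0 < #|B| by apply/card_gt0P; exists s.
  have bl : b \in s :: l := Hcov _ bB.
  have rtb : r t b by rewrite Hs.
  have Hsz' : size l + 2 <= 2 * (#|t |: B| - 1).
    rewrite cardsU1 tB add1n subSS subn0.
    have -> : #|B| = (#|B| - 1).+1 by rewrite subn1 prednK.
    by rewrite mulnS addnC leq_add2l.
  move: bl; rewrite inE => /orP [/eqP bs|bl].
    subst b; exists [:: t, s & l]; split => /=.
    + by rewrite rbt rtb.
    + by [].
    + by rewrite -addn2.
    + move=> z; rewrite !inE => /orP [->|/Hcov]; first by rewrite orbT.
      by rewrite inE => /orP [->|->]; rewrite ?orbT.
  case/splitPr: bl Hp Hl Hcov Hsz' => l1 l2 Hp Hl Hcov Hsz'.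
  exists (l1 ++ [:: b, t, b & l2]); split.
  + move: Hp; rewrite !cat_path /= => /andP [-> /andP [-> ->]].
    by rewrite rbt rtb.
  + by move: Hl; rewrite !last_cat.
  + move: Hsz'; rewrite !size_cat /=; lia.
  + move=> z; rewrite !inE => /orP [/eqP ->|/Hcov].
      by rewrite mem_cat !inE eqxx !orbT.
    rewrite !inE !mem_cat !inE => /or3P [->|->|/orP [->|->]]; by rewrite ?orbT.
apply: (fin B BA _ HI); apply/subsetP => z zA.
  apply: (conn_closed (D := mem B) _ sB (Hc z zA)) => v w vB evw.
  apply/negPn/negP => wB; have vB1 : v \in B by exact: vB.
  have wB1 : w \notin B by exact: wB.
  by move: (noedge (v, w)); rewrite /= vB1 evw wB1.
Qed.

Ltac neq_rw := repeat match goal with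
 | H : is_true (?x != ?y) |- context [?x == ?y] => rewrite (negbTE H)
 | H : is_true (?x != ?y) |- context [?y == ?x] => rewrite [y == x]eq_sym (negbTE H)
 | |- context [?x == ?x] => rewrite eqxx
 end.

Ltac split4 p u a b c := case: (eqVneq p u) => [->|?]; [|case: (eqVneq p a) => [->|?];
   [|case: (eqVneq p b) => [->|?]; [|case: (eqVneq p c) => [->|?]]]].

Lemma step_eq (T:eqType) (f : rel T) u a b c : symmetric f ->
  f u a = false -> f u b = false -> f u c = false -> u != a -> u != b -> u != c ->
  a != b -> b != c -> a != c -> f a b -> f b c ->
  add_edge u c (add_edge b a (del_edge u a (del_edge b c
     (add_edge u a (add_edge u b (del_edge a b f)))))) =
  add_edge u b (add_edge u c (del_edge b c f)).
Proof.
move=> Hs fua fub fuc ua ub uc ab bc ac fab fbc.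
have fau : f a u = false by rewrite Hs.
have fbu : f b u = false by rewrite Hs.
have fcu : f c u = false by rewrite Hs.
have fba : f b a by rewrite Hs.
have fcb : f c b by rewrite Hs.
apply: rel_ext => p q; rewrite /add_edge /del_edge.
split4 p u a b c; split4 q u a b c; neq_rw;
  rewrite /= ?fua ?fub ?fuc ?fau ?fbu ?fcu ?fab ?fba ?fbc ?fcb /= ?andbT ?orbF ?orbT ?andbF //.
Qed.

Lemma S_sym (T:eqType) (f : rel T) u a b :
  add_edge u a (add_edge u b (del_edge a b f)) = add_edge u b (add_edge u a (del_edge b a f)).
Proof.
apply: rel_ext => p q; rewrite /add_edge /del_edge.
case: (p == u); case: (q == u); case: (p == a); case: (q == a); case: (p == b); case: (q == b);
  by rewrite /= ?andbT ?orbF ?orbT ?andbF.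
Qed.

Lemma S_xy (T:eqType) (f : rel T) u x y : symmetric f -> f u x -> f u y -> f x y = false ->
  u != x -> u != y -> x != y ->
  add_edge u x (add_edge u y (del_edge x y (add_edge x y (del_edge u x (del_edge u y f))))) = f.
Proof.
move=> Hs fux fuy fxy ux uy xy.
have fxu : f x u by rewrite Hs.
have fyu : f y u by rewrite Hs.
have fyx : f y x = false by rewrite Hs.
apply: rel_ext => p q; rewrite /add_edge /del_edge.
split4 p u x y y; split4 q u x y y; neq_rw;
  rewrite /= ?fux ?fuy ?fxy ?fxu ?fyu ?fyx /= ?andbT ?orbF ?orbT ?andbF //.
Qed.

Lemma card_le_uniq (T:finType) (P : pred T) (s : seq T) :
  uniq s -> (forall z, z \in s -> P z) -> size s <= #|P|.
Proof.
move=> us sP; rewrite cardE; apply: uniq_leq_size => // z /sP Pz.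
by rewrite mem_enum.
Qed.

Lemma deg1_uniq n (e : rel (vtx n)) a z1 z2 : deg e a = 1 -> e a z1 -> e a z2 -> z1 = z2.
Proof.
move=> D1 h1 h2; apply/eqP/negPn/negP => ne.
have := @card_le_uniq _ [pred w | e a w] [:: z1; z2].
rewrite /= inE ne /= -/(deg e a) D1 => /(_ isT) H.
have : 2 <= 1 by apply: H => z; rewrite !inE => /orP [] /eqP ->.
by [].
Qed.

Lemma deg3_in n (e : rel (vtx n)) u a b c z : deg e u = 3 -> e u a -> e u b -> e u c ->
  a != b -> a != c -> b != c -> e u z -> z \in [:: a; b; c].
Proof.
move=> D3 ha hb hc ab ac bc hz; apply/negPn/negP => nz.
have := @card_le_uniq _ [pred w | e u w] [:: z; a; b; c].
rewrite /= -/(deg e u) D3.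
move: nz; rewrite !inE !negb_or => /and3P [za zb zc].
rewrite za zb zc ab ac bc /= => /(_ isT) H.
have : 4 <= 3 by apply: H => w; rewrite !inE => /or4P [] /eqP ->.
by [].
Qed.

Fixpoint ppath (A : Type) (R : A -> A -> Prop) (x : A) (l : seq A) : Prop :=
  if l is y :: l' then R x y /\ ppath R y l' else True.

Lemma in_map_In (T : eqType) (B : Type) (f : T -> B) q s : q \in s -> List.In (f q) (map f s).
Proof.
elim: s => [|z s IH] //=; rewrite inE => /orP [/eqP ->|/IH]; by [left|right].
Qed.

Section Spr.
Variables (n : nat) (T0 : rel (vtx n)) (u p x y : vtx n).
Hypotheses (n2 : 2 <= n) (HT : phylo_tree T0) (nu : n <= u) (Tup : T0 u p) (Tux : T0 u x)
  (Tuy : T0 u y) (px : p != x) (py : p != y) (xy : x != y).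

Definition e1 := add_edge x y (del_edge u x (del_edge u y T0)).
Definition d := del_edge u p e1.
Definition S a b := add_edge u a (add_edge u b (del_edge a b e1)).

Let Hs : symmetric T0. Proof. by case: HT. Qed.
Let Hi : irreflexive T0. Proof. by case: HT. Qed.
Let Hd : forall v, deg T0 v = if v < n then 1 else 3. Proof. by case: HT. Qed.

Lemma nTxy : T0 x y = false.
Proof. apply/negP => h; apply: (no_tri n2 HT Tux Tuy); by rewrite Hs. Qed.

Let ux : u != x. Proof. by apply: contraTneq Tux => ->; rewrite Hi. Qed.
Let uy : u != y. Proof. by apply: contraTneq Tuy => ->; rewrite Hi. Qed.
Let up : u != p. Proof. by apply: contraTneq Tup => ->; rewrite Hi. Qed.

Lemma Tnb z : T0 u z -> z \in [:: p; x; y].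
Proof.
apply: deg3_in => //; by rewrite Hd ltnNge nu.
Qed.

Lemma e1_sym : symmetric e1.
Proof. exact: add_sym (del_sym _ _ (del_sym _ _ Hs)). Qed.

Lemma e1_irr : irreflexive e1.
Proof. exact: add_irr xy (del_irr _ _ (del_irr _ _ Hi)). Qed.

Lemma e1u z : e1 u z = (z == p).
Proof.
rewrite /e1 /add_edge /del_edge eqxx (negbTE ux) (negbTE uy) /= !orbF.
case: (eqVneq z p) => [->|zp]; first by rewrite Tup py px.
apply/negP => /andP [/andP [h zy] zx]; move: (Tnb h); rewrite !inE.
by rewrite (negbTE zp) (negbTE zy) (negbTE zx).
Qed.

Lemma d_u z : d u z = false.
Proof. rewrite /d /del_edge e1u eqxx /=; by case: (z == p). Qed.

Lemma d_sym : symmetric d.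
Proof. exact: del_sym e1_sym. Qed.

Lemma C_u : ~~ connect d x u.
Proof.
apply/negP => C.
have : (fun z => z != u) u.
  apply: (conn_closed (D := fun z => z != u) _ _ C); last by rewrite eq_sym.
  by move=> v z _; apply: contraTneq => ->; rewrite d_sym d_u.
by rewrite eqxx.
Qed.

Lemma C_p : ~~ connect d x p.
Proof.
apply/negP => C; move/negP: (bridge n2 HT Tup); apply.
set f := del_edge u p T0.
have fux : f u x by rewrite /f /del_edge Tux eqxx [x == p]eq_sym (negbTE px) (negbTE up).
have fuy : f u y by rewrite /f /del_edge Tuy eqxx [y == p]eq_sym (negbTE py) (negbTE up).
apply: (connect_trans (connect1 fux)).
apply: (connect_sub _ C) => a b.
have fs : symmetric f := del_sym _ _ Hs.
rewrite /d /e1 /del_edge /add_edge => /andP [H nup].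
case/or3P: H => [/andP [/andP [tab _] _] | /andP [/eqP -> /eqP ->] | /andP [/eqP -> /eqP ->]].
- by apply: connect1; rewrite /f /del_edge tab nup.
- apply: (connect_trans (y := u)); apply: connect1; by rewrite // fs.
- apply: (connect_trans (y := u)); apply: connect1; by rewrite // fs.
Qed.

Lemma C_ne a : connect d x a -> (a != u) && (a != p).
Proof.
move=> C; apply/andP; split.
  by apply: contraNneq C_u => <-.
by apply: contraNneq C_p => <-.
Qed.

Lemma Cb a b : connect d x a -> e1 a b -> connect d x b.
Proof.
move=> C eab; apply: (connect_trans C); apply: connect1.
case/andP: (C_ne C) => au ap.
by rewrite /d /del_edge eab (negbTE au) (negbTE ap).
Qed.

Lemma Cb' a b : connect d x b -> e1 a b -> connect d x a.
Proof. by move=> C eab; apply: (Cb C); rewrite e1_sym. Qed.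

Lemma internal b a c : connect d x b -> e1 b a -> e1 b c -> a != c -> n <= b.
Proof.
move=> C eba ebc ac; rewrite leqNgt; apply/negP => bn.
have D1 : deg T0 b = 1 by rewrite Hd bn.
have bu : b != u by case/andP: (C_ne C).
suff [w hw] : exists w, forall z, e1 b z -> z = w.
  by move: ac; rewrite (hw _ eba) (hw _ ebc) eqxx.
case: (eqVneq b x) => [bx|bx].
  subst b; exists y => z; rewrite /e1 /add_edge /del_edge eqxx [x == u]eq_sym (negbTE ux).
  rewrite (negbTE xy) /= andbT orbF => /orP [/andP [txz zu] | /eqP //].
  have := deg1_uniq D1 txz (_ : T0 x u); rewrite Hs Tux => /(_ isT) zu'.
  by move: zu; rewrite zu' eqxx.
case: (eqVneq b y) => [bY|bY].
  subst b; exists x => z; rewrite /e1 /add_edge /del_edge eqxx [y == u]eq_sym (negbTE uy).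
  rewrite [y == x]eq_sym (negbTE xy) /= andbT => /orP [/andP [tyz zu] | /eqP //].
  have := deg1_uniq D1 tyz (_ : T0 y u); rewrite Hs Tuy => /(_ isT) zu'.
  by move: zu; rewrite zu' eqxx.
have [w tbw] : exists w, T0 b w.
  exists a; move: eba; rewrite /e1 /add_edge /del_edge (negbTE bx) (negbTE bY) /= !orbF.
  by case/andP => /andP [].
exists w => z; rewrite /e1 /add_edge /del_edge (negbTE bx) (negbTE bY) /= !orbF.
case/andP => /andP [tbz _] _; exact: deg1_uniq D1 tbz tbw.
Qed.

Lemma S_x_y : S x y = T0.
Proof. by rewrite /S /e1; apply: S_xy => //; exact: nTxy. Qed.

Lemma step a b c : connect d x b -> e1 a b -> e1 b c -> a != c -> nni (S a b) (S b c).
Proof.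
move=> C eab ebc ac.
have Ca := Cb' C eab; have Cc := Cb C ebc.
case/andP: (C_ne C) => bu bp; case/andP: (C_ne Ca) => au ap; case/andP: (C_ne Cc) => cu cp.
have ab : a != b by apply: contraTneq eab => ->; rewrite e1_irr.
have bc : b != c by apply: contraTneq ebc => ->; rewrite e1_irr.
have eba : e1 b a by rewrite e1_sym.
exists u, b, a, c; split => //.
- exact: internal C eba ebc ac.
- by rewrite /S /add_edge !eqxx !orbT.
- split => //.
  + by rewrite /S /add_edge !eqxx !orbT.
  + rewrite /S /add_edge /del_edge ebc eqxx [b == a]eq_sym (negbTE ab) [c == a]eq_sym (negbTE ac).
    by rewrite /=.
- rewrite /S step_eq ?e1u ?(negbTE ap) ?(negbTE bp) ?(negbTE cp) //; first exact: tree_iso_refl.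
  + exact: e1_sym.
  + by rewrite eq_sym.
  + by rewrite eq_sym.
  + by rewrite eq_sym.
Qed.

Lemma S_comm a b : S a b = S b a.
Proof. by rewrite /S S_sym. Qed.

Definition canon (a b : vtx n) := if a < b then (a, b) else (b, a).
Definition share (q1 q2 : vtx n * vtx n) :=
  [|| q1.1 == q2.1, q1.1 == q2.2, q1.2 == q2.1 | q1.2 == q2.2].
Definition Aset := [set q : vtx n * vtx n | [&& e1 q.1 q.2, connect d x q.1 & q.1 < q.2]].
Definition rl q1 q2 := [&& q1 \in Aset, q2 \in Aset, q1 != q2 & share q1 q2].
Definition s0 := canon x y.

Lemma ord_trich (a b : vtx n) : a != b -> ~~ (a < b) -> b < a.
Proof.
move=> ab; rewrite -leqNgt leq_eqVlt => /orP [/eqP E|//].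
by move: ab; rewrite (val_inj E) eqxx.
Qed.

Lemma canon_sym a b : canon a b = canon b a.
Proof.
rewrite /canon; case: (ltngtP a b) => // E.
by rewrite (val_inj E).
Qed.

Lemma canon_mem z a b : (z == (canon a b).1) || (z == (canon a b).2) = (z == a) || (z == b).
Proof. by rewrite /canon; case: (a < b) => //=; rewrite orbC. Qed.

Lemma canon_A a b : e1 a b -> connect d x a -> canon a b \in Aset.
Proof.
move=> eab Ca; have ab : a != b by apply: contraTneq eab => ->; rewrite e1_irr.
rewrite /canon; case: ifP => H; rewrite inE /= ?eab ?Ca ?H //.
rewrite e1_sym eab (Cb Ca eab) /=; exact: ord_trich ab (negbT H).
Qed.

Lemma canon_neq a b c : a != b -> a != c -> canon a b != canon b c.
Proof.
move=> ab ac; apply/negP => /eqP E.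
have := canon_mem a a b; rewrite E canon_mem eqxx /= (negbTE ab) (negbTE ac).
by [].
Qed.

Lemma canon_share a b c : share (canon a b) (canon b c).
Proof.
rewrite /share.
have h1 := canon_mem b a b; have h2 := canon_mem b b c.
rewrite eqxx orbT in h1; rewrite eqxx in h2.
case/orP: h1 => /eqP <-; case/orP: h2 => /eqP <-; by rewrite eqxx ?orbT.
Qed.

Lemma rl_sym : symmetric rl.
Proof.
move=> q1 q2; rewrite /rl /share eq_sym [q2.1 == q1.1]eq_sym [q2.1 == q1.2]eq_sym.
rewrite [q2.2 == q1.1]eq_sym [q2.2 == q1.2]eq_sym.
by case: (q1 \in Aset); case: (q2 \in Aset); case: (q1 != q2); case: (q1.1 == q2.1);
  case: (q1.2 == q1.1); case: (q1.1 == q2.2); case: (q1.2 == q2.1); case: (q1.2 == q2.2).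
Qed.

Lemma rl_A q1 q2 : rl q1 q2 -> q2 \in Aset.
Proof. by case/and4P. Qed.

Lemma s0_A : s0 \in Aset.
Proof.
apply: canon_A; last exact: connect0.
by rewrite /e1 /add_edge !eqxx orbT.
Qed.

Lemma S_s0 : S s0.1 s0.2 = T0.
Proof. by rewrite /s0 /canon; case: (x < y) => /=; rewrite ?S_x_y // S_comm S_x_y. Qed.

Lemma rl_step q1 q2 : rl q1 q2 -> nni (S q1.1 q1.2) (S q2.1 q2.2).
Proof.
case: q1 q2 => [a1 b1] [a2 b2] /and4P [].
rewrite /Aset !inE /= => /and3P [e1ab C1 l1] /and3P [e2ab C2 l2] neq.
rewrite /share /= => /or4P [/eqP E|/eqP E|/eqP E|/eqP E].
- subst a2; rewrite S_comm; apply: step => //; first by rewrite e1_sym.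
  by apply: contraNneq neq => ->.
- subst b2; rewrite S_comm [S a2 a1]S_comm; apply: step => //; first by rewrite e1_sym.
    by rewrite e1_sym.
  apply/negP => /eqP E; subst; move: (ltn_trans l1 l2); by rewrite ltnn.
- subst a2; apply: step => //.
  apply/negP => /eqP E; subst; move: (ltn_trans l1 l2); by rewrite ltnn.
- subst b2; rewrite [S a2 b1]S_comm; apply: step => //; first exact: Cb C1 e1ab.
    by rewrite e1_sym.
  by apply: contraNneq neq => ->.
Qed.

Lemma rl_conn q : q \in Aset -> connect rl s0 q.
Proof.
pose D := [pred z | connect d x z && [forall w, e1 z w ==> connect rl s0 (canon z w)]].
suff HD : forall z, connect d x z -> D z.
  case: q => a b; rewrite /Aset inE /= => /and3P [eab Ca lab].
  case/andP: (HD a Ca) => _ /forallP /(_ b); rewrite eab /= /canon lab.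
  by [].
move=> z Cz; apply: (conn_closed (D := D) _ _ Cz).
  move=> v z' /andP [Cv /forallP Pv] dvz.
  have evz : e1 v z' by move: dvz; rewrite /d /del_edge => /andP [].
  have Cz' := Cb Cv evz.
  rewrite /D /= Cz'; apply/forallP => w; apply/implyP => ezw.
  move/implyP: (Pv z') => /(_ evz) Hv.
  case: (eqVneq w v) => [->|wv]; first by rewrite canon_sym.
  apply: (connect_trans Hv); apply: connect1.
  have vz : v != z' by apply: contraTneq evz => ->; rewrite e1_irr.
  rewrite /rl canon_A // canon_A // canon_share canon_neq // ?andbT.
  by rewrite eq_sym.
rewrite /D /= connect0 /=; apply/forallP => w; apply/implyP => exw.
case: (eqVneq w y) => [->|wy]; first exact: connect0.
apply: connect1; rewrite /rl s0_A canon_A ?connect0 //= /s0.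
rewrite [canon x y]canon_sym canon_neq ?andbT; last by rewrite eq_sym.
- exact: canon_share.
- by rewrite eq_sym.
Qed.

Lemma card_A : #|Aset| <= 4 * n.
Proof.
have n2' := n2.
apply: (@leq_trans (Ecnt e1)).
  by apply: subset_leq_card; apply/subsetP => q; rewrite /Aset !inE => /and3P [].
apply: (@leq_trans (#|[set q : vtx n * vtx n | T0 q.1 q.2] :|: [set (x, y); (y, x)]|)).
  apply: subset_leq_card; apply/subsetP => -[a b]; rewrite !inE /e1 /add_edge /del_edge /=.
  case/or3P => [/andP [/andP [-> _] _] | /andP [/eqP -> /eqP ->] | /andP [/eqP -> /eqP ->]];
    by rewrite ?eqxx ?orbT.
apply: (leq_trans (leq_card_setU _ _)).
have := Ecnt_phylo n2 HT; rewrite /Ecnt => ->.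
rewrite cards2; lia.
Qed.

Lemma quad_walk : exists l : seq (rel (vtx n)),
  [/\ ppath (@nni n) T0 l, last T0 l = T0, size l <= 8 * n &
     forall a b, e1 a b -> connect d x a -> List.In (S a b) (T0 :: l)].
Proof.
have [l0 [Hp Hl Hsz Hcov]] := cover_walk rl_sym s0_A rl_A rl_conn.
pose f := fun q : vtx n * vtx n => S q.1 q.2.
exists (map f l0); split.
- rewrite -S_s0 -/(f s0); elim: l0 s0 Hp {Hl Hsz Hcov} => [|q l IH] q0 //= /andP [r1 r2].
  split; [exact: rl_step | exact: IH].
- by rewrite -S_s0 -/(f s0) last_map Hl.
- rewrite size_map; apply: (leq_trans Hsz); have := card_A; lia.
- move=> a b eab Ca.
  have -> : S a b = f (canon a b) by rewrite /f /canon; case: (a < b) => //=; rewrite S_comm.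
  rewrite -S_s0 -/(f s0) -/(map f (s0 :: l0)); apply: in_map_In; apply: Hcov.
  exact: canon_A.
Qed.

End Spr.

Lemma iso_phylo n (e e' : rel (vtx n)) : tree_iso e e' -> phylo_tree e -> phylo_tree e'.
Proof.
case=> f [fl fe] [Hs Hi Hd Hc].
have fe' : forall a b, e' a b = e ((f^-1)%g a) ((f^-1)%g b) by move=> a b; rewrite -fe !permKV.
split.
- by move=> a b; rewrite !fe' Hs.
- by move=> a; rewrite fe' Hi.
- move=> v; rewrite /deg.
  have -> : #|[pred w | e' v w]| = #|(f^-1)%g @^-1: [set w | e ((f^-1)%g v) w]|.
    apply: eq_card => w; by rewrite !inE fe'.
  rewrite card_preimset; last exact: perm_inj.
  have -> : #|[set w | e ((f^-1)%g v) w]| = deg e ((f^-1)%g v).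
    by apply: eq_card => w; rewrite inE.
  rewrite Hd; congr (if _ then _ else _).
  case: (ltnP v n) => vn.
    have : (f^-1)%g (f v) = v by rewrite permK.
    by rewrite fl // => ->.
  apply/negP => H; have := fl _ H; rewrite permKV => E.
  by move: H; rewrite -E ltnNge vn.
- move=> a b; rewrite -[a](permKV f) -[b](permKV f).
  move: (Hc ((f^-1)%g a) ((f^-1)%g b)); move: ((f^-1)%g a) ((f^-1)%g b) => c c' C.
  have : (fun z => connect e' (f c) (f z)) c' .
    apply: (conn_closed (D := fun z => connect e' (f c) (f z)) _ _ C); last exact: connect0.
    move=> z z' Cz ezz'; apply: (connect_trans Cz); apply: connect1; by rewrite fe.
  by [].
Qed.

Lemma nni_phylo' n (e e' : rel (vtx n)) : 2 <= n -> phylo_tree e -> nni e e' -> phylo_tree e'.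
Proof.
move=> n2 He [u [v [b [c [_ _ euv [eub bv evc cu] Hiso]]]]].
exact: iso_phylo Hiso (nni_phylo n2 He euv eub bv evc cu).
Qed.

Lemma ppath_cat (A : Type) (R : A -> A -> Prop) x l1 l2 :
  ppath R x l1 -> ppath R (last x l1) l2 -> ppath R x (l1 ++ l2).
Proof. elim: l1 x => [|y l IH] x //= [H1 H2] H3; split => //; exact: IH. Qed.

Lemma ppath_nth (A : Type) (R : A -> A -> Prop) d0 x l : ppath R x l ->
  forall i, i.+1 < size (x :: l) -> R (nth d0 (x :: l) i) (nth d0 (x :: l) i.+1).
Proof.
elim: l x => [|y l IH] x //= [H1 H2] [|i] //= Hi.
exact: (IH y H2 i).
Qed.

Lemma ppath_all (A : Type) (R : A -> A -> Prop) (P : A -> Prop) d0 x l :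
  (forall a b, P a -> R a b -> P b) -> P x -> ppath R x l ->
  forall i, i < size (x :: l) -> P (nth d0 (x :: l) i).
Proof.
move=> HP; elim: l x => [|y l IH] x Px //=.
  by move=> _ [|i].
move=> [H1 H2] [|i] //= Hi.
exact: (IH y (HP _ _ Px H1) H2 i).
Qed.

Lemma In_nth (A : Type) d0 (z : A) l : List.In z l -> exists2 i, i < size l & nth d0 l i = z.
Proof.
elim: l => [|y l IH] //= [->|/IH [i Hi E]]; first by exists 0.
by exists i.+1.
Qed.

Lemma In_cat_l (A : Type) (z : A) l1 l2 : List.In z l1 -> List.In z (l1 ++ l2).
Proof. elim: l1 => [|y l IH] //= [->|/IH]; by [left|right]. Qed.

Lemma In_cat_r (A : Type) (z : A) l1 l2 : List.In z l2 -> List.In z (l1 ++ l2).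
Proof. elim: l1 => [|y l IH] //= H; right; exact: IH. Qed.

Lemma size_flat (A B : Type) (f : A -> seq B) s k :
  (forall z, size (f z) <= k) -> size (flatten (map f s)) <= k * size s.
Proof.
move=> H; elim: s => [|z s IH] //=; rewrite size_cat mulnS; exact: leq_add.
Qed.

Definition quad n := (vtx n * vtx n * vtx n * vtx n)%type.

Definition validq n (T0 : rel (vtx n)) (q : quad n) :=
  let: (u, p, x, y) := q in [&& n <= u, T0 u p, T0 u x, T0 u y, p != x, p != y & x != y].

Lemma assemble n (T0 : rel (vtx n)) : 2 <= n -> phylo_tree T0 -> forall L : seq (quad n),
  exists seg : seq (rel (vtx n)),
  [/\ ppath (@nni n) T0 seg, last T0 seg = T0, size seg <= 8 * n * size L &
    forall u p x y, (u, p, x, y) \in L -> validq T0 (u, p, x, y) ->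
    forall a b, e1 T0 u x y a b -> connect (d T0 u p x y) x a ->
      List.In (S T0 u x y a b) (T0 :: seg)].
Proof.
move=> n2 HT; elim=> [|[[[u p] x] y] L [seg [Hp Hl Hsz Hc]]].
  by exists [::]; split.
case V: (validq T0 (u, p, x, y)).
  move: (V) => /= /and5P [nu Tup Tux Tuy /and3P [px py xy]].
  have [lq [Hq Hql Hqs Hqc]] := quad_walk n2 HT nu Tup Tux Tuy px py xy.
  exists (lq ++ seg); split.
  - apply: ppath_cat => //; by rewrite Hql.
  - by rewrite last_cat Hql.
  - by rewrite size_cat /= mulnS leq_add.
  - move=> u' p' x' y'; rewrite inE => /orP [/eqP E|H] V' a b eab Ca.
      move: eab Ca; case: E => -> -> -> -> eab Ca.
      case: (Hqc a b eab Ca) => [Ha|H]; first by left.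
      by right; apply: In_cat_l.
    case: (Hc _ _ _ _ H V' a b eab Ca) => [Ha|H']; first by left.
    by right; apply: In_cat_r.
exists seg; split => //.
- by apply: (leq_trans Hsz); rewrite leq_mul2l ltnW ?orbT.
- move=> u' p' x' y'; rewrite inE => /orP [/eqP E|H] V'.
    by move: V'; case: E => -> -> -> ->; rewrite V.
  exact: Hc.
Qed.

Definition nb n (T0 : rel (vtx n)) (u : vtx n) := enum [pred w | T0 u w].

Definition Qs n (T0 : rel (vtx n)) : seq (quad n) :=
  flatten [seq flatten [seq flatten [seq [seq (u, p, x, y) | y <- nb T0 u]
     | x <- nb T0 u] | p <- nb T0 u] | u <- enum (vtx n)].

Lemma size_Qs n (T0 : rel (vtx n)) : phylo_tree T0 -> size (Qs T0) <= 27 * (n + (n - 2)).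
Proof.
case=> _ _ Hd _.
have nb3 : forall u, size (nb T0 u) <= 3.
  by move=> u; rewrite /nb -cardE -/(deg T0 u) Hd; case: (u < n).
rewrite /Qs; apply: leq_trans; first apply: (@size_flat _ _ _ _ 27).
  2: by rewrite size_enum_ord.
move=> u; apply: (@leq_trans (9 * size (nb T0 u))); last first.
  by have := nb3 u; lia.
apply: size_flat => p; apply: (@leq_trans (3 * size (nb T0 u))); last first.
  by have := nb3 u; lia.
apply: size_flat => x; rewrite size_map; exact: nb3.
Qed.

Lemma mem_Qs n (T0 : rel (vtx n)) u p x y : T0 u p -> T0 u x -> T0 u y -> (u, p, x, y) \in Qs T0.
Proof.
move=> Tup Tux Tuy; apply/flatten_mapP; exists u; first by rewrite mem_enum.
apply/flatten_mapP; exists p; first by rewrite mem_enum.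
apply/flatten_mapP; exists x; first by rewrite mem_enum.
by apply: map_f; rewrite mem_enum.
Qed.

Theorem mainTheorem2 :
  exists C : nat, forall (n : nat) (T0 : rel (vtx n)),
    (2 <= n)%N -> phylo_tree T0 ->
    exists w : seq (rel (vtx n)),
      [/\ nni_walk w, ((size w).-1 <= C * n ^ 2)%N &
          (forall T, in_spr_nbhd T0 T -> visits w T)].
Proof.
exists 432 => n T0 n2 HT.
have [seg [Hp Hl Hsz Hc]] := assemble n2 HT (Qs T0).
exists (T0 :: seg); split.
- split => //; split.
    move=> i Hi; apply: (@ppath_all _ (@nni n) (@phylo_tree n) (fun _ _ => false) T0 seg _ HT Hp i Hi).
    by move=> a b Ha Hab; exact: nni_phylo' n2 Ha Hab.
  move=> i Hi; exact: ppath_nth Hp i Hi.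
- rewrite /=; apply: (leq_trans Hsz); have := size_Qs HT.
  move: (size (Qs T0)) => k Hk; nia.
- move=> T [u [p [x [y [a [b H]]]]]].
  move: H => /= [nu [Tup Tux Tuy] [px py xy] [eab Ca] Hiso].
  have V' : validq T0 (u, p, x, y) by rewrite /= nu Tup Tux Tuy px py xy.
  have := Hc u p x y (mem_Qs Tup Tux Tuy) V' a b eab Ca.
  case/(In_nth (fun _ _ => false)) => i Hi E.
  by exists i => //; rewrite E.
Qed.
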